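(* Let $(a_p)\in\mathcal{T}^+$ and let $\langle\cdot,\cdot\rangle$ be the associated inner product on $\mathcal{S}^*$, $\langle b,c\rangle=\sum_{p\in\mathbb{Z}}b^p\overline{c^p}a_p$. The operator $z$ on $\mathcal{S}^*$ is continuous with respect to the inner product topology if and only if the sequence of ratios $(a_p/a_{p+1})_{p\in\mathbb{Z}}$ is bounded. In this case $\|z\|^2=\sup_p\{a_p/a_{p+1}\}$.
   Context: $\mathcal{S}$ is the space of rapidly decreasing complex $\mathbb{Z}$-indexed sequences and $\mathcal{S}^*$ its dual; $e_p\in\mathcal{S}^*$ has $1$ in place $p$ and $0$ elsewhere, and elements are written $b=(b^p)=\sum b^pe_p$. $z$ denotes the operator on $\mathcal{S}^*$ adjoint to multiplication by $z=e^{2\pi it}$ under the Fourier isomorphism $\mathcal{S}\cong C^\infty(S^1,\mathbb{C})$; explicitly $ze_p=e_{p-1}$. $\mathcal{T}^+$ is the set of strictly positive rapidly decreasing sequences $(a_p)_{p\in\mathbb{Z}}$ with $a_p=a_{-p}$. $\|z\|$ is the operator norm with respect to $\langle\cdot,\cdot\rangle$. *)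

(* Defs.v *)
From Stdlib Require Import Reals ZArith.
From Coquelicot Require Import Coquelicot.
Open Scope R_scope.

Definition sumZ (f : Z -> R) : R :=
  Series (fun n : nat => f (Z.of_nat n)) + Series (fun n : nat => f (- Z.of_nat (S n))%Z).

Definition wt (p : Z) : R := 1 + IZR (Z.abs p).

Definition rapidly_decreasing (a : Z -> R) : Prop :=
  forall k : nat, exists M : R, forall p : Z, Rabs (a p) * wt p ^ k <= M.

Definition Tplus (a : Z -> R) : Prop :=
  rapidly_decreasing a /\ (forall p, 0 < a p) /\ (forall p, a p = a (- p)%Z).

(* S^* : the dual of the rapidly decreasing sequences = polynomially bounded
   (tempered) complex sequences b = sum b^p e_p. *)
Definition Sdual (b : Z -> C) : Prop :=
  exists (k : nat) (M : R), forall p : Z, Cmod (b p) <= M * wt p ^ k.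

(* The operator z on S^*, z e_p = e_{p-1}, i.e. (z b)^p = b^(p+1). *)
Definition zop (b : Z -> C) : Z -> C := fun p => b (p + 1)%Z.

Definition ip (a : Z -> R) (b c : Z -> C) : C :=
  (sumZ (fun p => Re (b p * Cconj (c p) * RtoC (a p))),
   sumZ (fun p => Im (b p * Cconj (c p) * RtoC (a p)))).

Definition ipnorm (a : Z -> R) (b : Z -> C) : R := sqrt (Re (ip a b b)).

Definition subseq (b c : Z -> C) : Z -> C := fun p => Cminus (b p) (c p).

Definition z_continuous (a : Z -> R) : Prop :=
  forall b, Sdual b -> forall eps, 0 < eps -> exists delta, 0 < delta /\
    forall c, Sdual c -> ipnorm a (subseq c b) < delta ->
      ipnorm a (subseq (zop c) (zop b)) < eps.

Definition z_opnorm (a : Z -> R) : Rbar :=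
  Lub_Rbar (fun r => exists b, Sdual b /\ ipnorm a b <= 1 /\ r = ipnorm a (zop b)).

Definition ratios_bounded (a : Z -> R) : Prop :=
  exists M : R, forall p : Z, Rabs (a p / a (p + 1)%Z) <= M.

Definition ratios_sup (a : Z -> R) : Rbar :=
  Lub_Rbar (fun r => exists p : Z, r = a p / a (p + 1)%Z).

(* Main.v *)
Require Import Defs.
From Stdlib Require Import Reals ZArith Lia Lra Classical.
From Coquelicot Require Import Coquelicot.
Open Scope R_scope.

Lemma ex_series_le_R (a b : nat -> R) :
  (forall n, Rabs (a n) <= b n) -> ex_series b -> ex_series a.
Proof. intros H Hb. exact (@ex_series_le R_AbsRing R_CompleteNormedModule a b H Hb). Qed.

Lemma ex_series_zero : ex_series (fun _ : nat => 0).
Proof.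
  apply (ex_series_le_R _ (fun n => (/2)^n)).
  - intro n. rewrite Rabs_R0. apply pow_le. lra.
  - apply ex_series_geom. rewrite Rabs_pos_eq; lra.
Qed.

Lemma Series_zero : Series (fun _ : nat => 0) = 0.
Proof.
  rewrite (Series_ext _ (fun _ => 0 * 1)); [|intros; ring].
  rewrite Series_scal_l. ring.
Qed.

Lemma tele_sum (N : nat) :
  sum_n (fun n => / (INR n + 1) - / (INR n + 2)) N = 1 - / (INR N + 2).
Proof.
  induction N.
  - rewrite sum_O. change (/ (INR 0 + 1) - / (INR 0 + 2) = 1 - / (INR 0 + 2)).
    simpl INR. field.
  - rewrite sum_Sn, IHN.
    change ((1 - / (INR N + 2)) + (/ (INR (S N) + 1) - / (INR (S N) + 2)) = 1 - / (INR (S N) + 2)).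
    rewrite S_INR.
    assert (0 <= INR N) by apply pos_INR. field. lra.
Qed.

Lemma ex_series_tele : ex_series (fun n => / (INR n + 1) - / (INR n + 2)).
Proof.
  exists 1.
  change (is_lim_seq (sum_n (fun n => / (INR n + 1) - / (INR n + 2))) 1).
  apply is_lim_seq_ext with (fun N => 1 - / (INR N + 2)).
  { intro; now rewrite tele_sum. }
  assert (H : is_lim_seq (fun N => 1 - / (INR N + 2)) (1 - 0)).
  2:{ rewrite Rminus_0_r in H. exact H. }
  apply is_lim_seq_minus'. apply is_lim_seq_const.
  replace (Finite 0) with (Rbar_inv p_infty) by reflexivity.
  apply is_lim_seq_inv. 2: discriminate.
  replace p_infty with (Rbar_plus p_infty 2) by reflexivity.
  apply is_lim_seq_plus with p_infty 2. apply is_lim_seq_INR. apply is_lim_seq_const.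
  reflexivity.
Qed.

Lemma inv_sq_le (x : R) : 0 <= x -> / (x + 1) ^ 2 <= 2 * (/ (x + 1) - / (x + 2)).
Proof.
  intro H.
  replace (2 * (/ (x + 1) - / (x + 2))) with (2 / ((x+1)*(x+2))) by (field; lra).
  replace (/ (x + 1) ^ 2) with (1 / ((x+1)*(x+1))) by (field; lra).
  apply Rmult_le_reg_r with ((x+1)*(x+1)*(x+2)). 
  { apply Rmult_lt_0_compat; [apply Rmult_lt_0_compat|]; lra. }
  unfold Rdiv. field_simplify; try lra.
Qed.

Lemma ex_series_inv_sq : ex_series (fun n => / (INR n + 1) ^ 2).
Proof.
  apply (ex_series_le_R _ (fun n => 2 * (/ (INR n + 1) - / (INR n + 2)))).
  - intro n. rewrite Rabs_pos_eq.
    + apply inv_sq_le, pos_INR.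
    + assert (0 <= INR n) by apply pos_INR. apply Rlt_le, Rinv_0_lt_compat. nra.
  - apply (ex_series_scal_l 2 _ ex_series_tele).
Qed.

Lemma Series_point (m : nat) (x : R) :
  Series (fun n => if Nat.eq_dec n m then x else 0) = x.
Proof.
  rewrite (Series_incr_n_aux _ m).
  2:{ intros k Hk. destruct (Nat.eq_dec k m); [lia|reflexivity]. }
  assert (Hz : forall k, (if Nat.eq_dec (m + S k) m then x else 0) = 0).
  { intro k. destruct (Nat.eq_dec (m + S k) m); [lia|reflexivity]. }
  rewrite Series_incr_1.
  - rewrite (Series_ext _ _ Hz), Series_zero.
    destruct (Nat.eq_dec (m + 0) m); [ring|lia].
  - apply ex_series_incr_1. apply (ex_series_ext (fun _ => 0)).
    + intro k. now rewrite Hz.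
    + apply ex_series_zero.
Qed.

Definition summ (f : Z -> R) : Prop :=
  ex_series (fun n : nat => f (Z.of_nat n)) /\ ex_series (fun n : nat => f (- Z.of_nat (S n))%Z).

Lemma sumZ_ext (f g : Z -> R) : (forall p, f p = g p) -> sumZ f = sumZ g.
Proof. intro H. unfold sumZ. rewrite (Series_ext _ _ (fun n => H _)). now rewrite (Series_ext _ _ (fun n => H _)). Qed.

Lemma sumZ_scal (c : R) (f : Z -> R) : sumZ (fun p => c * f p) = c * sumZ f.
Proof. unfold sumZ. rewrite !Series_scal_l. ring. Qed.

Lemma sumZ_le (f g : Z -> R) : summ g -> (forall p, 0 <= f p <= g p) -> sumZ f <= sumZ g.
Proof.
  intros [H1 H2] H. unfold sumZ. apply Rplus_le_compat; apply Series_le; auto.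
Qed.

Lemma sumZ_nonneg (f : Z -> R) : summ f -> (forall p, 0 <= f p) -> 0 <= sumZ f.
Proof.
  intros Hs H. replace 0 with (sumZ (fun _ => 0)).
  - apply sumZ_le; auto. intro; split; [lra|auto].
  - unfold sumZ. rewrite Series_zero. ring.
Qed.

Lemma sumZ_point (r : Z) (x : R) : sumZ (fun p => if Z.eq_dec p r then x else 0) = x.
Proof.
  unfold sumZ. destruct (Z_le_gt_dec 0 r).
  - destruct (Z_of_nat_complete r l) as [m ->].
    rewrite (Series_ext _ (fun n => if Nat.eq_dec n m then x else 0)).
    2:{ intro n. destruct (Z.eq_dec _ _), (Nat.eq_dec n m); first [reflexivity | lia]. }
    rewrite (Series_ext (fun n => if Z.eq_dec _ _ then x else 0) (fun _ => 0)).
    2:{ intro n. destruct (Z.eq_dec _ _); first [reflexivity | lia]. }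
    rewrite Series_point, Series_zero. ring.
  - destruct (Z_of_nat_complete (- r - 1)) as [m Hm]; [lia|].
    rewrite (Series_ext (fun n => if Z.eq_dec (Z.of_nat n) r then x else 0) (fun _ => 0)).
    2:{ intro n. destruct (Z.eq_dec _ _); first [reflexivity | lia]. }
    rewrite (Series_ext (fun n => if Z.eq_dec (- Z.of_nat (S n)) r then x else 0) (fun n => if Nat.eq_dec n m then x else 0)).
    2:{ intro n. destruct (Z.eq_dec _ _), (Nat.eq_dec n m); first [reflexivity | lia]. }
    rewrite Series_point, Series_zero. ring.
Qed.

Lemma summ_neg0 (f : Z -> R) : summ f -> ex_series (fun n : nat => f (- Z.of_nat n)%Z).
Proof. intros [_ H2]. apply ex_series_incr_1. exact H2. Qed.

Lemma sumZ_shift (f : Z -> R) : summ f -> sumZ (fun p => f (p + 1)%Z) = sumZ f.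
Proof.
  intro H. pose proof (summ_neg0 f H) as H3. destruct H as [H1 H2]. unfold sumZ.
  rewrite (Series_ext (fun n => f (Z.of_nat n + 1)%Z) (fun n => f (Z.of_nat (S n)))).
  2:{ intro n. f_equal. lia. }
  rewrite (Series_ext (fun n => f (- Z.of_nat (S n) + 1)%Z) (fun n => f (- Z.of_nat n)%Z)).
  2:{ intro n. f_equal. lia. }
  rewrite (Series_incr_1 (fun n => f (Z.of_nat n)) H1).
  rewrite (Series_incr_1 (fun n => f (- Z.of_nat n)%Z) H3).
  simpl. ring.
Qed.

Lemma summ_shift (f : Z -> R) : summ f -> summ (fun p => f (p + 1)%Z).
Proof.
  intro H. pose proof (summ_neg0 f H) as H3. destruct H as [H1 H2]. split.
  - apply (ex_series_ext (fun n => f (Z.of_nat (S n)))).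
    { intro n. f_equal. lia. }
    apply (ex_series_incr_1 (fun n => f (Z.of_nat n))). exact H1.
  - apply (ex_series_ext (fun n => f (- Z.of_nat n)%Z)).
    { intro n. f_equal. lia. }
    exact H3.
Qed.

Lemma wt_ge1 (p : Z) : 1 <= wt p.
Proof. unfold wt. assert (0 <= IZR (Z.abs p)) by (apply IZR_le; lia). lra. Qed.

Lemma summ_bound (f : Z -> R) (K : R) :
  (forall p, 0 <= f p <= K * / wt p ^ 2) -> summ f.
Proof.
  intro H.
  assert (HK : 0 <= K).
  { destruct (H 0%Z) as [A B]. pose proof (wt_ge1 0).
    assert (0 < / wt 0 ^ 2) by (apply Rinv_0_lt_compat; apply pow_lt; lra).
    destruct (Rle_or_lt 0 K); auto. nra. }
  split; apply (ex_series_le_R _ (fun n => / (INR n + 1) ^ 2 * K));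
    try (apply ex_series_scal_r; apply ex_series_inv_sq); intro n;
    destruct (H (Z.of_nat n)) as [A1 B1]; destruct (H (- Z.of_nat (S n))%Z) as [A2 B2].
  - rewrite Rabs_pos_eq by lra. replace (wt (Z.of_nat n)) with (INR n + 1) in B1. lra.
    unfold wt. rewrite Z.abs_eq by lia. rewrite <- INR_IZR_INZ. ring.
  - rewrite Rabs_pos_eq by lra. replace (wt (- Z.of_nat (S n))) with (INR n + 2) in B2.
    2:{ unfold wt. rewrite Z.abs_neq by lia. rewrite Z.opp_involutive, <- INR_IZR_INZ, S_INR. ring. }
    assert (0 <= INR n) by apply pos_INR.
    assert (/ (INR n + 2) ^ 2 <= / (INR n + 1) ^ 2).
    { apply Rinv_le_contravar. apply pow_lt; lra. apply pow_incr; lra. }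
    nra.
Qed.

Definition nsq (x : C) : R := fst x * fst x + snd x * snd x.

Lemma nsq_ge0 (x : C) : 0 <= nsq x.
Proof. unfold nsq. nra. Qed.

Lemma re_self (x : C) (r : R) : Re (x * Cconj x * RtoC r) = nsq x * r.
Proof. destruct x as [u v]. unfold Re, Cmult, Cconj, RtoC, nsq. simpl. ring. Qed.

Lemma ipnorm_eq (a : Z -> R) (b : Z -> C) :
  ipnorm a b = sqrt (sumZ (fun p => nsq (b p) * a p)).
Proof.
  unfold ipnorm, ip. simpl. f_equal. apply sumZ_ext. intro p. apply re_self.
Qed.

Lemma nsq_Cmod (x : C) : nsq x = Cmod x * Cmod x.
Proof. unfold Cmod. rewrite sqrt_sqrt. unfold nsq; ring. nra. Qed.

Lemma nsq_minus0 (x : C) : nsq (Cminus x (RtoC 0)) = nsq x.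
Proof. destruct x as [u v]. unfold nsq, Cminus, Cplus, Copp, RtoC. simpl. ring. Qed.

Lemma Sdual_summ (a : Z -> R) (b : Z -> C) : Tplus a -> Sdual b ->
  summ (fun p => nsq (b p) * a p).
Proof.
  intros [Hr [Hpos _]] [k [M H]].
  destruct (Hr (k + k + 2)%nat) as [K HK].
  apply (summ_bound _ (M * M * K)). intro p.
  pose proof (Hpos p). pose proof (nsq_ge0 (b p)). split. nra.
  pose proof (wt_ge1 p) as Hw. set (w := wt p) in *.
  set (W := w ^ k).
  assert (HW : 0 < W) by (apply pow_lt; lra).
  assert (Hn : nsq (b p) <= (M * W) * (M * W)).
  { rewrite nsq_Cmod. pose proof (Cmod_ge_0 (b p)). specialize (H p). fold w W in H. nra. }
  specialize (HK p). fold w in HK. rewrite Rabs_pos_eq in HK by lra.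
  rewrite !pow_add in HK. fold W in HK.
  assert (Hw2 : 0 < w ^ 2) by (apply pow_lt; lra).
  set (iw := / w ^ 2).
  assert (Hiw : w ^ 2 * iw = 1) by (unfold iw; field; lra).
  assert (0 < iw) by (apply Rinv_0_lt_compat; lra).
  assert (nsq (b p) * a p <= M * M * (a p * (W * W * w ^ 2)) * iw).
  { replace (M * M * (a p * (W * W * w ^ 2)) * iw) with ((M * W) * (M * W) * a p * (w^2 * iw)) by ring.
    rewrite Hiw. nra. }
  assert (M * M * (a p * (W * W * w ^ 2)) * iw <= M * M * K * iw).
  { apply Rmult_le_compat_r; [lra|]. apply Rmult_le_compat_l; [nra|]. lra. }
  lra.
Qed.

Lemma Sdual_zop (b : Z -> C) : Sdual b -> Sdual (zop b).
Proof.
  intros [k [M H]]. exists k, (M * 2 ^ k). intro p. unfold zop.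
  pose proof (wt_ge1 p). pose proof (wt_ge1 (p+1)).
  assert (HM : 0 <= M).
  { pose proof (H p). pose proof (Cmod_ge_0 (b p)).
    assert (0 < wt p ^ k) by (apply pow_lt; lra). nra. }
  assert (Hw : wt (p + 1) <= 2 * wt p).
  { unfold wt. assert (IZR (Z.abs (p + 1)) <= IZR (Z.abs p) + 1).
    { rewrite <- plus_IZR. apply IZR_le. lia. }
    assert (0 <= IZR (Z.abs p)) by (apply IZR_le; lia). lra. }
  eapply Rle_trans. apply H.
  rewrite Rmult_assoc, <- Rpow_mult_distr. apply Rmult_le_compat_l; auto.
  apply pow_incr. lra.
Qed.

Lemma Sdual_sub (b c : Z -> C) : Sdual b -> Sdual c -> Sdual (subseq b c).
Proof.
  intros [k1 [M1 H1]] [k2 [M2 H2]]. exists (k1 + k2)%nat, (M1 + M2). intro p.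
  pose proof (wt_ge1 p).
  assert (HM1 : 0 <= M1).
  { pose proof (H1 p). pose proof (Cmod_ge_0 (b p)).
    assert (0 < wt p ^ k1) by (apply pow_lt; lra). nra. }
  assert (HM2 : 0 <= M2).
  { pose proof (H2 p). pose proof (Cmod_ge_0 (c p)).
    assert (0 < wt p ^ k2) by (apply pow_lt; lra). nra. }
  unfold subseq, Cminus. eapply Rle_trans. apply Cmod_triangle. rewrite Cmod_opp.
  pose proof (H1 p). pose proof (H2 p).
  assert (wt p ^ k1 <= wt p ^ (k1 + k2)) by (apply Rle_pow; lia || lra).
  assert (wt p ^ k2 <= wt p ^ (k1 + k2)) by (apply Rle_pow; lia || lra).
  nra.
Qed.

Lemma summ_scal (c : R) (f : Z -> R) : summ f -> summ (fun p => c * f p).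
Proof. intros [H1 H2]. split; [exact (ex_series_scal_l c _ H1) | exact (ex_series_scal_l c _ H2)]. Qed.

Lemma zop_bound (a : Z -> R) (M : R) (b : Z -> C) : Tplus a ->
  (forall p, a p <= M * a (p + 1)%Z) -> Sdual b ->
  sumZ (fun p => nsq (zop b p) * a p) <= M * sumZ (fun p => nsq (b p) * a p).
Proof.
  intros Ha HM Hb. pose proof (Sdual_summ a b Ha Hb) as Hs.
  rewrite <- (sumZ_shift _ Hs), <- sumZ_scal.
  apply sumZ_le. apply summ_scal. apply (summ_shift (fun p => nsq (b p) * a p) Hs).
  intro p. unfold zop. pose proof (nsq_ge0 (b (p + 1)%Z)).
  destruct Ha as [_ [Hpos _]]. pose proof (Hpos p). pose proof (HM p). split. nra. nra.
Qed.

Definition pt (r : Z) (t : R) : Z -> C := fun p => if Z.eq_dec p r then RtoC t else RtoC 0.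
Definition zero : Z -> C := fun _ => RtoC 0.

Lemma Sdual_pt r t : Sdual (pt r t).
Proof.
  exists 0%nat, (Rabs t). intro p. unfold pt. simpl. rewrite Rmult_1_r.
  destruct (Z.eq_dec p r); rewrite Cmod_R; [lra|]. rewrite Rabs_R0. apply Rabs_pos.
Qed.

Lemma Sdual_zero : Sdual zero.
Proof. exists 0%nat, 0. intro p. unfold zero. rewrite Cmod_R, Rabs_R0. simpl. lra. Qed.

Lemma nsq_pt r t p : nsq (pt r t p) = if Z.eq_dec p r then t * t else 0.
Proof. unfold pt, nsq, RtoC. destruct (Z.eq_dec p r); simpl; ring. Qed.

Lemma nsq_zpt r t p : nsq (zop (pt r t) p) = if Z.eq_dec p (r - 1) then t * t else 0.
Proof.
  unfold zop. rewrite nsq_pt. destruct (Z.eq_dec (p + 1) r), (Z.eq_dec p (r - 1));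
  first [reflexivity | lia].
Qed.

Lemma norm_point (a : Z -> R) (c : Z -> C) (r : Z) (s : R) :
  (forall p, nsq (c p) = if Z.eq_dec p r then s else 0) -> ipnorm a c = sqrt (s * a r).
Proof.
  intro H. rewrite ipnorm_eq. f_equal. rewrite <- (sumZ_point r (s * a r)).
  apply sumZ_ext. intro p. rewrite H. destruct (Z.eq_dec p r); [subst; ring | ring].
Qed.

Lemma norm_bound (a : Z -> R) (M : R) (b : Z -> C) : Tplus a -> 0 <= M ->
  (forall p, a p <= M * a (p + 1)%Z) -> Sdual b ->
  ipnorm a (zop b) <= sqrt M * ipnorm a b.
Proof.
  intros Ha HM0 HM Hb. rewrite !ipnorm_eq, <- sqrt_mult_alt by auto.
  apply sqrt_le_1_alt. apply zop_bound; auto.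
Qed.

Lemma ratio_pos (a : Z -> R) : Tplus a -> forall p, 0 < a p / a (p + 1)%Z.
Proof. intros [_ [H _]] p. apply Rdiv_lt_0_compat; auto. Qed.

Lemma ratio_le (a : Z -> R) (M : R) : Tplus a -> (forall p, a p / a (p + 1)%Z <= M) ->
  forall p, a p <= M * a (p + 1)%Z.
Proof.
  intros Ha H p. destruct Ha as [_ [Hp _]]. pose proof (Hp (p+1)%Z). pose proof (H p).
  replace (a p) with (a p / a (p + 1)%Z * a (p + 1)%Z) by (field; lra). nra.
Qed.

Theorem mainTheorem17 (a : Z -> R) (ha : Tplus a) :
  (z_continuous a <-> ratios_bounded a) /\
  (ratios_bounded a -> Rbar_mult (z_opnorm a) (z_opnorm a) = ratios_sup a).
Proof.
  pose proof (ratio_pos a ha) as Hrat.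
  assert (Hpos : forall p, 0 < a p) by (destruct ha as [_ [H _]]; exact H).
  split; [split|].
  -
    intro Hc. apply NNPP. intro Hnb.
    destruct (Hc zero Sdual_zero 1 Rlt_0_1) as [d [Hd Hcd]].
    assert (Hex : exists p, 4 / (d * d) < a p / a (p + 1)%Z).
    { apply NNPP. intro Hne. apply Hnb. exists (4 / (d * d)). intro p.
      rewrite Rabs_pos_eq by (apply Rlt_le, Hrat).
      apply Rnot_lt_le. intro Hl. apply Hne. exists p. exact Hl. }
    destruct Hex as [p Hp].
    set (r := (p + 1)%Z) in *.
    pose proof (Hpos r) as Hr. pose proof (Hpos p) as Hp0.
    set (sr := sqrt (a r)).
    assert (Hsr : 0 < sr) by (apply sqrt_lt_R0; auto).
    assert (Hsr2 : sr * sr = a r) by (apply sqrt_sqrt; lra).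
    set (t := d / (2 * sr)).
    assert (Ht : t * t * a r = (d / 2) * (d / 2)).
    { unfold t. rewrite <- Hsr2. field. lra. }
    specialize (Hcd (pt r t) (Sdual_pt r t)).
    rewrite (norm_point a _ r (t * t)) in Hcd.
    2:{ intro q. unfold subseq, zero. rewrite nsq_minus0. apply nsq_pt. }
    rewrite Ht, sqrt_square in Hcd by lra.
    rewrite (norm_point a _ (r - 1) (t * t)) in Hcd.
    2:{ intro q. unfold subseq. change (nsq (Cminus (zop (pt r t) q) (RtoC 0)) = if Z.eq_dec q (r - 1) then t * t else 0).
        rewrite nsq_minus0. apply nsq_zpt. }
    replace (r - 1)%Z with p in Hcd by (unfold r; lia).
    assert (Hlt : sqrt (t * t * a p) < 1) by (apply Hcd; lra).
    clear Hcd.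
    assert (H1 : 1 < t * t * a p).
    { replace (t * t * a p) with ((t * t * a r) * (a p / a r)) by (field; lra).
      rewrite Ht. 
      assert (4 / (d * d) * ((d/2) * (d/2)) = 1) by (field; lra).
      assert (0 < (d/2) * (d/2)) by nra. nra. }
    assert (sqrt 1 < sqrt (t * t * a p)) by (apply sqrt_lt_1_alt; lra).
    rewrite sqrt_1 in H. lra.
  -
    intros [M HM] b Hb eps Heps.
    assert (HM0 : 0 <= M) by (eapply Rle_trans; [apply Rabs_pos | apply (HM 0%Z)]).
    assert (HMle : forall p, a p <= M * a (p + 1)%Z).
    { apply ratio_le; auto. intro p. eapply Rle_trans; [apply Rle_abs | apply HM]. }
    pose proof (sqrt_pos M) as Hs.
    exists (eps / (sqrt M + 1)). split.
    { apply Rdiv_lt_0_compat; lra. }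
    intros c Hc Hn.
    change (ipnorm a (zop (subseq c b)) < eps).
    pose proof (norm_bound a M (subseq c b) ha HM0 HMle (Sdual_sub c b Hc Hb)) as Hnb.
    pose proof (sqrt_pos (Re (ip a (subseq c b) (subseq c b)))) as Hn0.
    fold (ipnorm a (subseq c b)) in Hn0.
    assert (sqrt M * ipnorm a (subseq c b) <= sqrt M * (eps / (sqrt M + 1))) by nra.
    assert (sqrt M * (eps / (sqrt M + 1)) < eps).
    { apply Rmult_lt_reg_r with (sqrt M + 1). lra.
      replace (sqrt M * (eps / (sqrt M + 1)) * (sqrt M + 1)) with (sqrt M * eps) by (field; lra).
      nra. }
    lra.
  -
    intros [M HM].
    unfold ratios_sup.
    set (E := fun r => exists p : Z, r = a p / a (p + 1)%Z).
    destruct (Lub_Rbar_correct E) as [Hub Hleast].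
    destruct (Lub_Rbar E) as [s| |] eqn:Hs.
    + assert (Hle : forall p, a p / a (p + 1)%Z <= s).
      { intro p. exact (Hub _ (ex_intro _ p eq_refl)). }
      assert (Hs0 : 0 <= s) by (pose proof (Hle 0%Z); pose proof (Hrat 0%Z); lra).
      assert (HMle : forall p, a p <= s * a (p + 1)%Z) by (apply ratio_le; auto).
      assert (Hz : z_opnorm a = Finite (sqrt s)).
      { unfold z_opnorm. apply is_lub_Rbar_unique. split.
        - intros x [b [Hb [Hn ->]]]. simpl.
          eapply Rle_trans. apply (norm_bound a s b ha Hs0 HMle Hb).
          pose proof (sqrt_pos s). nra.
        - intros u Hu. destruct u as [u| |]; simpl; auto.
          + assert (Hsq : forall p, sqrt (a p / a (p + 1)%Z) <= u).
            { intro p. set (r := (p + 1)%Z).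
              pose proof (Hpos r) as Hr.
              set (sr := sqrt (a r)).
              assert (Hsr : 0 < sr) by (apply sqrt_lt_R0; auto).
              assert (Hsr2 : sr * sr = a r) by (apply sqrt_sqrt; lra).
              set (t := / sr).
              assert (Ht : t * t * a r = 1) by (unfold t; rewrite <- Hsr2; field; lra).
              assert (Ht' : t * t * a (r - 1)%Z = a p / a r).
              { replace (r - 1)%Z with p by (unfold r; lia). unfold t. rewrite <- Hsr2. field. lra. }
              assert (Hmem : exists b, Sdual b /\ ipnorm a b <= 1 /\
                               sqrt (a p / a r) = ipnorm a (zop b)).
              { exists (pt r t). split; [apply Sdual_pt|]. split.
                - rewrite (norm_point a _ r (t * t)) by apply nsq_pt. rewrite Ht, sqrt_1. lra.
                - rewrite (norm_point a _ (r - 1) (t * t)) by apply nsq_zpt. now rewrite Ht'. }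
              exact (Hu _ Hmem). }
            assert (Hu0 : 0 <= u) by (eapply Rle_trans; [apply sqrt_pos | apply (Hsq 0%Z)]).
            assert (Hsu : s <= u * u).
            { assert (Hl := Hleast (Finite (u * u))). simpl in Hl. apply Hl.
              intros x [p ->]. simpl. specialize (Hsq p).
              pose proof (sqrt_pos (a p / a (p + 1)%Z)).
              rewrite <- (sqrt_sqrt (a p / a (p + 1)%Z)) by (apply Rlt_le, Hrat). nra. }
            rewrite <- (sqrt_square u Hu0). apply sqrt_le_1_alt. exact Hsu.
          + apply (Hu (sqrt (a 0%Z / a 1%Z))).
            pose (r := 1%Z). pose proof (Hpos r) as Hr.
            set (sr := sqrt (a r)).
            assert (Hsr : 0 < sr) by (apply sqrt_lt_R0; auto).
            assert (Hsr2 : sr * sr = a r) by (apply sqrt_sqrt; lra).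
            set (t := / sr).
            assert (Ht : t * t * a r = 1) by (unfold t; rewrite <- Hsr2; field; lra).
            assert (Ht' : t * t * a (r - 1)%Z = a 0%Z / a r).
            { unfold t. rewrite <- Hsr2. simpl. field. lra. }
            exists (pt r t). split; [apply Sdual_pt|]. split.
            * rewrite (norm_point a _ r (t * t)) by apply nsq_pt. rewrite Ht, sqrt_1. lra.
            * rewrite (norm_point a _ (r - 1) (t * t)) by apply nsq_zpt. now rewrite Ht'. }
      rewrite Hz. simpl. rewrite sqrt_sqrt; auto.
    + exfalso. assert (Hl := Hleast (Finite M)). simpl in Hl. apply Hl.
      intros x [p ->]. simpl. eapply Rle_trans; [apply Rle_abs | apply HM].
    + exfalso. exact (Hub _ (ex_intro _ 0%Z eq_refl)).
Qed.
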